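(* Fix integers $L\ge 1$ and $n_0,\dots,n_L\ge 1$, and let $\boldsymbol{\mathcal W}=\mathbb{R}^{n_0\times n_1}\times\cdots\times\mathbb{R}^{n_{L-1}\times n_L}$, which has dimension $N=\sum_{l=1}^L n_{l-1}n_l$. For $\mathbf W=(W_1,\dots,W_L)\in\boldsymbol{\mathcal W}$ let $F(\mathbf W,\cdot)\colon\mathbb{R}^{n_0}\to\mathbb{R}^{n_L}$ be the network map $F(\mathbf W,\cdot)=\Lambda_L(W_L,\cdot)\circ\cdots\circ\Lambda_1(W_1,\cdot)$, where $\Lambda_l(W_l,x)=\sigma_l(W_l^\top x+b_l)$ with fixed biases $b_l\in\mathbb{R}^{n_l}$, each $\sigma_l$ applies a smooth, monotonically increasing, Lipschitz scalar function entrywise for $l<L$, and $\sigma_L=\mathrm{id}$. Let $f^*\colon\boldsymbol{\mathcal X}\to\boldsymbol{\mathcal Y}$ be a map (the task map), let $x_1,\dots,x_T\in\boldsymbol{\mathcal X}$ and $y_i=f^*(x_i)$. Let $E\colon\boldsymbol{\mathcal Y}\times\boldsymbol{\mathcal Y}\to\mathbb{R}$ be an error function such that for every $y\in\boldsymbol{\mathcal Y}$, $E(\cdot,y)$ is differentiable, $E$ has global minima, and $\phi=y$ is a global minimum of $E(\cdot,y)$ if and only if the gradient $\nabla_E(\phi)$ of $E(\cdot,y)$ vanishes at $\phi=y$. Define the empirical loss $\mathcal J(\mathbf W)=\frac1T\sum_{i=1}^T E(F(\mathbf W,x_i),y_i)$ and the matrix $\mathbf P(\mathbf W)=[\mathrm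 D_1F(\mathbf W,x_1),\dots,\mathrm D_1F(\mathbf W,x_T)]\in\mathbb{R}^{N\times Tn_L}$, where $\mathrm D_1F(\mathbf W,x_i)\in\mathbb{R}^{N\times n_L}$ is the (transposed) Jacobian of $\mathbf W\mapsto F(\mathbf W,x_i)$, i.e. its columns are the gradients with respect to all $N$ weight entries of the $n_L$ output components. Suppose $\operatorname{rank}\mathbf P(\mathbf W)=Tn_L$ for all $\mathbf W\in\boldsymbol{\mathcal W}$. Then: (1) if exact learning is achievable, i.e. there is $\mathbf W^*\in\boldsymbol{\mathcal W}$ with $F(\mathbf W^*,x_i)=f^*(x_i)$ for all $i=1,\dots,T$, then $\mathbf W^*$ is a global minimum of $\mathcal J$ and all critical points of $\mathcal J$ are global minima; (2) if exact learning is unachievable (no such $\mathbf W^*$ exists), then $\mathcal J$ has no critical point; in particular $\mathcal J$ is non-coercive.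
   Context: A critical point of $\mathcal J$ is a $\mathbf W$ with $\nabla\mathcal J(\mathbf W)=0$; by the chain rule $\nabla\mathcal J(\mathbf W)$ is proportional to $\mathbf P(\mathbf W)\boldsymbol\varepsilon(\mathbf W)$ with $\boldsymbol\varepsilon(\mathbf W)=[\nabla_E(F(\mathbf W,x_1))^\top,\dots,\nabla_E(F(\mathbf W,x_T))^\top]^\top\in\mathbb{R}^{Tn_L}$, where $\nabla_E(F(\mathbf W,x_i))$ is the gradient of $E(\cdot,y_i)$ at $F(\mathbf W,x_i)$. *)

(* Defs.v *)
From HB Require Import structures.
From mathcomp Require Import all_boot all_order all_algebra.
From mathcomp Require Import all_classical all_reals all_analysis.
Set Implicit Arguments. Unset Strict Implicit. Unset Printing Implicit Defensive.
Import Order.TTheory GRing.Theory Num.Theory.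
Import numFieldNormedType.Exports.
Local Open Scope ring_scope.

(* Layer k (k = 0..L-1, paper's layer l = k+1)
   has weight matrix W_{k+1} : 'M_(n k, n k.+1).
   The weight space W = R^{n0 x n1} x ... x R^{n_{L-1} x n_L} is encoded as
   the row vector space 'rV_N, N = \sum_(k<L) n k * n k.+1, by concatenating
   the vectorisations (mxvec) of the W_l; the layer matrices are recovered
   with submxrow / vec_mx. *)
Definition wdim (n : nat -> nat) (L : nat) : nat := (\sum_(k < L) n k * n k.+1)%N.

Section Network.
Variables (R : realType) (n : nat -> nat) (L : nat).

(* Weight matrix W_{k+1} of layer k (zero, and never used, when k >= L). *)
Definition layerW (w : 'rV[R]_(wdim n L)) (k : nat) : 'M[R]_(n k, n k.+1) :=
  match ltnP k L with
  | LtnNotGeq Hk => vec_mx (submxrow w (Ordinal Hk))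
  | GeqNotLtn _ => 0
  end.

Variables (sigma : nat -> R -> R) (b : forall k : nat, 'rV[R]_(n k.+1)).

Definition act (k : nat) (v : 'rV[R]_(n k.+1)) : 'rV[R]_(n k.+1) :=
  if (k.+1 < L)%N then map_mx (sigma k) v else v.

(* Row-vector convention: Lambda(W, x) = sigma(W^T x + b) is written
   sigma(x *m W + b) for x a row vector. *)
Fixpoint fwd (w : 'rV[R]_(wdim n L)) (x : 'rV[R]_(n 0)) (k : nat) : 'rV[R]_(n k) :=
  match k with
  | 0 => x
  | k'.+1 => @act k' (fwd w x k' *m @layerW w k' + b k')
  end.

Definition netF (w : 'rV[R]_(wdim n L)) (x : 'rV[R]_(n 0)) : 'rV[R]_(n L) :=
  fwd w x L.

End Network.

Definition grad (R : realType) (m : nat) (g : 'rV[R]_m -> R) (v : 'rV[R]_m)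
  : 'rV[R]_m := \row_k 'D_(delta_mx 0 k) g v.

Definition D1F (R : realType) (n : nat -> nat) (L : nat) (sigma : nat -> R -> R)
  (b : forall k : nat, 'rV[R]_(n k.+1)) (w : 'rV[R]_(wdim n L)) (x : 'rV[R]_(n 0))
  : 'M[R]_(wdim n L, n L) :=
  \matrix_(k, j) 'D_(delta_mx 0 k) (fun w' => netF sigma b w' x 0 j) w.

Definition Pmat (R : realType) (n : nat -> nat) (L : nat) (sigma : nat -> R -> R)
  (b : forall k : nat, 'rV[R]_(n k.+1)) (T : nat) (xs : 'I_T -> 'rV[R]_(n 0))
  (w : 'rV[R]_(wdim n L)) : 'M[R]_(wdim n L, \sum_(i < T) n L) :=
  mxrow (fun i : 'I_T => D1F sigma b w (xs i)).

Definition lossJ (R : realType) (n : nat -> nat) (L : nat) (sigma : nat -> R -> R)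
  (b : forall k : nat, 'rV[R]_(n k.+1)) (E : 'rV[R]_(n L) -> 'rV[R]_(n L) -> R)
  (fstar : 'rV[R]_(n 0) -> 'rV[R]_(n L)) (T : nat) (xs : 'I_T -> 'rV[R]_(n 0))
  (w : 'rV[R]_(wdim n L)) : R :=
  (T%:R)^-1 * \sum_(i < T) E (netF sigma b w (xs i)) (fstar (xs i)).

Definition smooth (R : realType) (f : R -> R) : Prop :=
  forall (k : nat) (x : R), derivable (iter k (@derive1 R R) f) x 1.

Definition global_min (R : realType) (U : Type) (J : U -> R) (u : U) : Prop :=
  forall v, J u <= J v.

Definition critical_point (R : realType) (m : nat) (J : 'rV[R]_m -> R) (v : 'rV[R]_m)
  : Prop := grad J v = 0.

Definition coercive (R : realType) (m : nat) (J : 'rV[R]_m -> R) : Prop :=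
  forall M : R, exists r : R, forall v : 'rV[R]_m, r < `|v| -> M < J v.

(* Main.v *)
Require Import Defs.
From HB Require Import structures.
From mathcomp Require Import all_boot all_order all_algebra.
From mathcomp Require Import all_classical all_reals all_analysis.
Import Order.TTheory GRing.Theory Num.Theory.
Import numFieldNormedType.Exports.
Local Open Scope classical_set_scope.
Local Open Scope ring_scope.

Lemma layerW_diff (R : realType) n L (k : nat) i j (w0 : 'rV[R]_(wdim n L)) :
  differentiable (fun w => layerW w k i j : R) w0.
Proof.
rewrite /layerW; case: ltnP => Hk.
  set o := Ordinal Hk.
  have -> : (fun w : 'rV[R]_(wdim n L) => vec_mx (submxrow w o) i j) = 
    (fun w => w 0 (tagnat.Rank o (mxvec_index i j))).
    by apply/funext => w; rewrite !mxE.
  exact: differentiable_coord.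
have -> : (fun w : 'rV[R]_(wdim n L) => (0 : 'M[R]_(n k, n k.+1)) i j) = cst 0.
  by apply/funext => w; rewrite mxE.
exact: differentiable_cst.
Qed.

Lemma fwd_diff (R : realType) n L (sigma : nat -> R -> R)
  (b : forall k : nat, 'rV[R]_(n k.+1)) (x : 'rV[R]_(n 0))
  (Hs : forall k, (k.+1 < L)%N -> forall t, derivable (sigma k) t 1) k
  (j : 'I_(n k)) (w0 : 'rV[R]_(wdim n L)) :
  differentiable (fun w => fwd sigma b w x k 0 j) w0.
Proof.
elim: k j w0 => [|k IH] j w0 /=.
  exact: differentiable_cst.
set g := fun w : 'rV[R]_(wdim n L) =>
  \sum_i (fwd sigma b w x k 0 i * layerW w k i j) + b k 0 j.
have Hg : forall w0, differentiable g w0.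
  move=> w1.
  have -> : g = \sum_i (fun w => fwd sigma b w x k 0 i * layerW w k i j)
     + cst (b k 0 j).
    by apply/funext => w; rewrite /g /= fct_sumE.
  apply: differentiableD; last exact: differentiable_cst.
  apply: differentiable_sum => i.
  have -> : (fun w => fwd sigma b w x k 0 i * layerW w k i j) =
    (fun w => fwd sigma b w x k 0 i) * (fun w => layerW w k i j) by [].
  apply: differentiableM; first exact: IH.
  exact: layerW_diff.
rewrite /act; case HkL: (k.+1 < L)%N.
  have -> : (fun w => map_mx (sigma k) (fwd sigma b w x k *m layerW w k + b k) 0 j)
     = sigma k \o g.
    by apply/funext => w; rewrite /g /= !mxE.
  apply: differentiable_comp; first exact: Hg.
  exact/derivable1_diffP/Hs.
have -> : (fun w => (fwd sigma b w x k *m layerW w k + b k) 0 j) = g.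
  by apply/funext => w; rewrite /g /= !mxE.
exact: Hg.
Qed.

Lemma netF_diff (R : realType) n L (sigma : nat -> R -> R)
  (b : forall k : nat, 'rV[R]_(n k.+1)) (x : 'rV[R]_(n 0))
  (Hs : forall k, (k.+1 < L)%N -> forall t, derivable (sigma k) t 1)
  (w0 : 'rV[R]_(wdim n L)) :
  differentiable (fun w => netF sigma b w x) w0.
Proof.
have -> : (fun w => netF sigma b w x) =
   \sum_j (fun w => netF sigma b w x 0 j *: (delta_mx 0 j : 'rV[R]_(n L))).
  by apply/funext => w; rewrite fct_sumE -row_sum_delta.
apply: differentiable_sum => j.
apply: differentiableZl.
exact: fwd_diff.
Qed.

Lemma D1F_entry (R : realType) n L (sigma : nat -> R -> R)
  (b : forall k : nat, 'rV[R]_(n k.+1)) (x : 'rV[R]_(n 0))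
  (Hs : forall k, (k.+1 < L)%N -> forall t, derivable (sigma k) t 1)
  (w : 'rV[R]_(wdim n L)) k j :
  D1F sigma b w x k j = ('D_(delta_mx 0 k) (fun w => netF sigma b w x) w) 0 j.
Proof.
rewrite derive_mx; first by rewrite !mxE.
exact/diff_derivable/netF_diff.
Qed.

Lemma chain_E (R : realType) m p (F : 'rV[R]_m -> 'rV[R]_p)
  (E : 'rV[R]_p -> R) (w v : 'rV[R]_m) :
  differentiable F w -> differentiable E (F w) ->
  'D_v (E \o F) w = \sum_j ('D_v F w) 0 j * grad E (F w) 0 j.
Proof.
move=> dF dE.
rewrite deriveE; last exact: differentiable_comp.
rewrite diff_comp //=.
have -> : 'd F w v = 'D_v F w by rewrite deriveE.
rewrite {1}(row_sum_delta ('D_v F w)) linear_sum; apply: eq_bigr => j _.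
by rewrite linearZ /= -deriveE // mxE.
Qed.

Lemma gradJ (R : realType) n L (sigma : nat -> R -> R)
  (b : forall k : nat, 'rV[R]_(n k.+1))
  (E : 'rV[R]_(n L) -> 'rV[R]_(n L) -> R)
  (fstar : 'rV[R]_(n 0) -> 'rV[R]_(n L))
  (T : nat) (xs : 'I_T -> 'rV[R]_(n 0))
  (Hs : forall k, (k.+1 < L)%N -> forall t, derivable (sigma k) t 1)
  (HE : forall y phi, differentiable (E^~ y) phi)
  (w : 'rV[R]_(wdim n L)) :
  grad (lossJ sigma b E fstar xs) w = (T%:R)^-1 *:
    (Pmat sigma b xs w *m
      \mxcol_i (grad (E^~ (fstar (xs i))) (netF sigma b w (xs i)))^T)^T.
Proof.
apply/rowP => k; rewrite /Pmat mul_mxrow_mxcol !mxE summxE.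
have -> : lossJ sigma b E fstar xs = (T%:R)^-1 \*o
    \sum_i ((E^~ (fstar (xs i))) \o (fun w => netF sigma b w (xs i))).
  by apply/funext => w'; rewrite /lossJ /= fct_sumE.
have dG : forall i w', differentiable
    ((E^~ (fstar (xs i))) \o (fun w => netF sigma b w (xs i))) w'.
  by move=> i w'; apply: differentiable_comp; [exact: netF_diff|exact: HE].
rewrite deriveMl; last first.
  apply: diff_derivable; apply: differentiable_sum => i; exact: dG.
congr (_ * _).
rewrite derive_sum; last by move=> i; exact/diff_derivable/dG.
apply: eq_bigr => i _.
rewrite chain_E; [|exact: netF_diff|exact: HE].
rewrite mxE; apply: eq_bigr => j _.
by rewrite (@D1F_entry _ _ _ _ _ _ Hs) !mxE.
Qed.

Lemma crit_eps (R : realType) n L (sigma : nat -> R -> R)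
  (b : forall k : nat, 'rV[R]_(n k.+1))
  (E : 'rV[R]_(n L) -> 'rV[R]_(n L) -> R)
  (fstar : 'rV[R]_(n 0) -> 'rV[R]_(n L))
  (T : nat) (xs : 'I_T -> 'rV[R]_(n 0))
  (Hs : forall k, (k.+1 < L)%N -> forall t, derivable (sigma k) t 1)
  (HE : forall y phi, differentiable (E^~ y) phi)
  (w : 'rV[R]_(wdim n L)) :
  (0 < T)%N -> \rank (Pmat sigma b xs w) = (T * n L)%N ->
  grad (lossJ sigma b E fstar xs) w = 0 ->
  forall i, grad (E^~ (fstar (xs i))) (netF sigma b w (xs i)) = 0.
Proof.
move=> T0 Hr; rewrite (@gradJ _ _ _ _ _ _ _ _ _ Hs HE) => /eqP.
rewrite scaler_eq0 invr_eq0 pnatr_eq0 (negbTE (lt0n_neq0 T0)) /= => /eqP/(congr1 trmx).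
rewrite trmxK trmx0 => /(congr1 trmx); rewrite trmx_mul trmx0.
set eps := mxcol _ => H.
have rf : row_free (Pmat sigma b xs w)^T.
  by rewrite /row_free mxrank_tr Hr sum_nat_const card_ord.
have : eps^T = 0.
  by apply: (row_free_inj rf); rewrite H mul0mx.
move=> /(congr1 trmx); rewrite trmxK trmx0 => e0 i.
have := mxcolK (fun i => (grad (E^~ (fstar (xs i))) (netF sigma b w (xs i)))^T) i.
rewrite -/eps e0 -(mxcol0 _) mxcolK => /(congr1 trmx).
by rewrite trmxK trmx0.
Qed.
Lemma min_crit (R : realType) m (J : 'rV[R]_m -> R) c :
  (forall w, differentiable J w) -> (forall v, J c <= J v) -> grad J c = 0.
Proof.
move=> dJ Hmin; apply/rowP => k; rewrite !mxE.
set v := delta_mx 0 k : 'rV[R]_m.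
pose g := fun h : R => J (h *: v + c).
have dg t : differentiable g t.
  have -> : g = J \o ((fun h : R => h *: v) + cst c) by [].
  apply: differentiable_comp; last exact: dJ.
  apply: differentiableD; last exact: differentiable_cst.
  apply: (@differentiableZl _ _ _ (fun h : R => h)).
  exact/derivable1_diffP/derivable_id.
have Hd := @derive1_at_min R g (-1) 1 0 (ltW (lt_trans (ltrN10 R) ltr01))
  (fun t _ => (derivable1_diffP _ _).2 (dg t)).
have : is_derive (0:R) (1:R) g 0.
  apply: Hd; first by rewrite in_itv /= ltrN10 ltr01.
  by move=> t _; rewrite /g scale0r add0r.
move=> /(@derive_val _ _ _ _ _ _ _) <-.
rewrite /derive /g /=. f_equal. f_equal. apply/funext => h /=.
by rewrite /shift /= addr0 scale0r add0r -[h *: 1]/(h * 1) mulr1.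
Qed.

Lemma coercive_min (R : realType) m (J : 'rV[R]_m -> R) :
  (forall w, differentiable J w) -> coercive J -> exists c, forall v, J c <= J v.
Proof.
move=> dJ /(_ (J 0)) [r Hr].
pose A := closed_ball_ Num.norm (0 : 'rV[R]_m) `|r|.
have A0 : A 0 by rewrite /A /closed_ball_ /= subr0 normr0.
have cA : compact A.
  apply: bounded_closed_compact; last exact: closed_closed_ball_.
  exists `|r|; split; first exact: num_real.
  move=> M HM y Ay /=; rewrite /A /closed_ball_ /= sub0r normrN in Ay.
  exact: (le_trans Ay (ltW HM)).
have cJ : {within A, continuous J}.
  apply: continuous_subspaceT => x; exact: differentiable_continuous.
have [c cA' Hc] := EVT_min_rV (ex_intro _ 0 A0) cA cJ.
exists c => v.
have [vA|vA] := pselect (A v).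
  by apply: Hc; rewrite inE.
apply: (le_trans (Hc 0 _)); first by rewrite inE.
apply/ltW/Hr.
rewrite (le_lt_trans (ler_norm r))//.
rewrite ltNge; apply/negP => Hv; apply: vA.
by rewrite /A /closed_ball_ /= sub0r normrN.
Qed.
Theorem theorem1 (R : realType) (L : nat) (n : nat -> nat)
  (sigma : nat -> R -> R) (b : forall k : nat, 'rV[R]_(n k.+1))
  (E : 'rV[R]_(n L) -> 'rV[R]_(n L) -> R)
  (fstar : 'rV[R]_(n 0) -> 'rV[R]_(n L))
  (T : nat) (xs : 'I_T -> 'rV[R]_(n 0)) :
  (1 <= L)%N ->
  (forall l, (l <= L)%N -> (1 <= n l)%N) ->
  (forall k, (k.+1 < L)%N ->
     [/\ smooth (sigma k), {homo sigma k : x y / x <= y} & lipschitz (sigma k)]) ->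
  (forall y phi, differentiable (E^~ y) phi) ->
  (forall y, exists phi0, global_min (E^~ y) phi0) ->
  (forall y, global_min (E^~ y) y) ->
  (forall y phi, grad (E^~ y) phi = 0 <-> phi = y) ->
  (forall w : 'rV[R]_(wdim n L), \rank (Pmat sigma b xs w) = (T * n L)%N) ->
  let J := lossJ sigma b E fstar xs in
  ((exists wstar : 'rV[R]_(wdim n L), forall i, netF sigma b wstar (xs i) = fstar (xs i)) ->
     (forall wstar : 'rV[R]_(wdim n L), (forall i, netF sigma b wstar (xs i) = fstar (xs i)) ->
        global_min J wstar) /\
     (forall w : 'rV[R]_(wdim n L), critical_point J w -> global_min J w)) /\
  (~ (exists wstar : 'rV[R]_(wdim n L), forall i, netF sigma b wstar (xs i) = fstar (xs i)) ->
     (forall w : 'rV[R]_(wdim n L), ~ critical_point J w) /\ ~ coercive J).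
Proof.
move=> L1 Hn Hsig HE Hmin0 Hmin Hgrad Hrank J.
have Hs : forall k, (k.+1 < L)%N -> forall t, derivable (sigma k) t 1.
  by move=> k hk t; case: (Hsig k hk) => sm _ _; exact: (sm 0%N t).
have gmin : forall w, (forall i, netF sigma b w (xs i) = fstar (xs i)) ->
    global_min J w.
  move=> w Hw v; rewrite /J /lossJ; apply: ler_wpM2l.
    by rewrite invr_ge0 ler0n.
  by apply: ler_sum => i _; rewrite Hw; exact: Hmin.
have dJ : forall w, differentiable J w.
  move=> w.
  have -> : J = cst ((T%:R)^-1 : R) *
    \sum_i ((E^~ (fstar (xs i))) \o (fun w => netF sigma b w (xs i))).
    by apply/funext => w'; rewrite /J /lossJ /= fct_sumE.
  apply: differentiableM; first exact: differentiable_cst.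
  apply: differentiable_sum => i.
  by apply: differentiable_comp; [exact: netF_diff|exact: HE].
have crit : forall w, critical_point J w ->
    forall i, netF sigma b w (xs i) = fstar (xs i).
  move=> w Hc i.
  have T0 : (0 < T)%N := leq_ltn_trans (leq0n i) (ltn_ord i).
  apply/(Hgrad _ _).1.
  exact: (@crit_eps _ _ _ _ _ _ _ _ _ Hs HE w T0 (Hrank w) Hc i).
split.
  move=> _; split; first exact: gmin.
  by move=> w Hc; apply: gmin; exact: crit.
move=> Hno.
have nocrit : forall w, ~ critical_point J w.
  by move=> w Hc; apply: Hno; exists w; exact: crit.
split => // Hco.
have [c Hc] := @coercive_min _ _ J dJ Hco.
by apply: (nocrit c); exact: min_crit.
Qed.
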